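(* For any real symmetric $n\times n$ matrix $M$, there exists a basis $\{f_1,\dots,f_n\}$ of $\mathbb R^n$ consisting of eigenfunctions of $M$ each of which has minimal support.
   Context: An eigenfunction is a nonzero eigenvector of $M$. For $f\in\mathbb R^n$, $\mathrm{supp}(f)=\{i\in\{1,\dots,n\}: f(i)\ne0\}$. An eigenfunction $f$ has minimal support if every eigenfunction $g$ for the same eigenvalue as $f$ with $\mathrm{supp}(g)\subseteq\mathrm{supp}(f)$ satisfies $\mathrm{supp}(g)=\mathrm{supp}(f)$. *)

(* Defs.v *)
From HB Require Import structures.
From mathcomp Require Import all_boot all_order all_algebra.
From mathcomp Require Import reals.
Set Implicit Arguments. Unset Strict Implicit. Unset Printing Implicit Defensive.
Import Order.TTheory GRing.Theory Num.Theory.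
Local Open Scope ring_scope.

Definition supp (R : nzRingType) (n : nat) (f : 'cV[R]_n) : {set 'I_n} :=
  [set i | f i 0 != 0].

Definition eigenfun (R : nzRingType) (n : nat) (M : 'M[R]_n) (a : R) (f : 'cV[R]_n) : Prop :=
  f != 0 /\ M *m f = a *: f.

Definition min_supp_eigenfun (R : nzRingType) (n : nat) (M : 'M[R]_n) (a : R) (f : 'cV[R]_n) : Prop :=
  eigenfun M a f /\
  forall g : 'cV[R]_n, eigenfun M a g -> supp g \subset supp f -> supp g = supp f.

(* Main.v *)
Require Import Defs.
From HB Require Import structures.
From mathcomp Require Import all_boot all_order all_algebra.
From mathcomp Require Import reals complex.
From Stdlib Require Import Classical.
Set Implicit Arguments. Unset Strict Implicit. Unset Printing Implicit Defensive.
Import Order.TTheory GRing.Theory Num.Theory.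
Local Open Scope ring_scope.

Section Circ.

Lemma diag_real (R : realType) n (M : 'M[R]_n) : M^T = M ->
  exists r : 'I_n -> R, forall w : 'rV[R]_n,
    exists v : 'I_n -> 'rV[R]_n, w = \sum_i v i /\ forall i, v i *m M = r i *: v i.
Proof.
move=> hM.
pose f := real_complex R.
pose A : 'M[R[i]]_n := map_mx f M.
have Asym : A \is symmetricmx.
  by apply/is_hermitianmxP; rewrite expr0 scale1r map_mx_id // /A map_trmx hM.
have Areal : A \is a realmx.
  by apply/mxOverP => i j; rewrite mxE complex_real.
have Aherm := realsym_hermsym Asym Areal.
have /orthomx_spectralP Aeq := hermitian_normalmx Aherm.
have dreal := hermitian_spectral_diag_real Aherm.
set P := spectralmx A in Aeq; set d := spectral_diag A in Aeq dreal.
have Pu : P \in unitmx by exact: spectral_unit.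
pose r i := complex.Re (d 0 i).
have dr i : d 0 i = f (r i).
  have := mxOverP dreal 0 i; rewrite /r /f.
  by case: (d 0 i) => a b; rewrite complex_real => /eqP ->.
exists r.
have PA : P *m A = diag_mx d *m P.
  by rewrite {1}Aeq !mulmxA mulmxV // mul1mx.
pose E := (\sum_(i < n) eigenspace M (r i))%MS.
have PE : (P <= map_mx f E)%MS.
  apply/row_subP => i.
  have : (row i P <= eigenspace A (d 0 i))%MS.
    apply/eigenspaceP.
    by rewrite -row_mul PA row_mul row_diag_mx -scalemxAl -rowE.
  rewrite dr /A -map_eigenspace => /submx_trans; apply.
  by rewrite map_submx (sumsmx_sup i).
have Efull : row_full E.
  rewrite /row_full eqn_leq rank_leq_col /=.
  have := mxrankS PE; rewrite mxrank_map.
  by have := Pu; rewrite -row_full_unit /row_full => /eqP ->.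
move=> w.
have : (w <= E)%MS by rewrite submx_full.
case/sub_sumsmxP => u wE.
exists (fun i => u i *m eigenspace M (r i)); split => // i.
by apply/eigenspaceP; rewrite submxMl.
Qed.
Variables (F : fieldType) (n : nat) (M : 'M[F]_n) (a : F).

Lemma nz_entry (g : 'cV[F]_n) : g != 0 -> exists i, i \in supp g.
Proof.
move=> gn0; apply: NNPP => hn; move/negP: gn0; apply; apply/eqP/matrixP => i j.
rewrite ord1 mxE; apply/eqP; apply: NNPP => hi.
by apply: hn; exists i; rewrite inE; apply/negP.
Qed.

Lemma exmin k (x : 'cV[F]_n) : (#|supp x| < k)%N -> eigenfun M a x ->
  exists g, min_supp_eigenfun M a g /\ supp g \subset supp x.
Proof.
elim: k x => [|k IH] x hk hx; first by [].
case: (classic (forall g, eigenfun M a g -> supp g \subset supp x -> supp g = supp x)).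
  by move=> h; exists x; split.
move=> /not_all_ex_not [g] H1.
have [hg H2] := imply_to_and _ _ H1.
have [hs hne] := imply_to_and _ _ H2.
have hp : supp g \proper supp x by rewrite properEneq hs andbT; apply/eqP.
have := proper_card hp => hc.
have [h [hh hs']] := IH g (leq_trans hc hk) hg.
by exists h; split => //; apply: subset_trans hs' hs.
Qed.

Lemma circ k (x : 'cV[F]_n) : (#|supp x| < k)%N -> M *m x = a *: x ->
  exists s : seq 'cV[F]_n, (forall y, y \in s -> min_supp_eigenfun M a y)
     /\ x \in <<s>>%VS.
Proof.
elim: k x => [|k IH] x hk hx; first by [].
have [->|xn0] := eqVneq x 0.
  by exists [::]; split => //; rewrite mem0v.
have [g [hg hgx]] := exmin (ltnSn _) (conj xn0 hx).
have [i hi] := nz_entry hg.1.1.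
have hix : i \in supp x by apply: (subsetP hgx).
move: (hi); rewrite inE => gi.
pose c := x i 0 / g i 0.
pose y := x - c *: g.
have hy : M *m y = a *: y.
  by rewrite /y mulmxBr -scalemxAr hg.1.2 hx scalerBr !scalerA mulrC.
have hys : supp y \proper supp x.
  apply/properP; split; last first.
    exists i => //; rewrite inE /y !mxE /c divfK // subrr eqxx //.
  apply/subsetP => j; rewrite !inE /y !mxE; apply: contraNN => /eqP hxj.
  have : j \notin supp g.
    by apply/negP => /(subsetP hgx); rewrite inE hxj eqxx.
  by rewrite inE negbK => /eqP ->; rewrite hxj mulr0 subrr.
have [s [hs hys']] := IH y (leq_trans (proper_card hys) hk) hy.
exists (g :: s); split.
  by move=> z; rewrite inE => /orP [/eqP -> //|]; apply: hs.
have -> : x = y + c *: g by rewrite /y subrK.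
rewrite span_cons; apply: memvD.
  by apply: (subvP (addvSr _ _)).
by apply: (subvP (addvSl _ _)); apply: memvZ; apply: memv_line.
Qed.

End Circ.
Section Assemble.
Variables (F : fieldType) (vT : vectType F).

Lemma free_sub (s : seq vT) : exists t : seq vT,
  {subset t <= s} /\ free t /\ (<<t>> = <<s>>)%VS.
Proof.
elim: s => [|x s [t [ts [ft st]]]]; first by exists [::]; split => //; split => //; exact: nil_free.
have [xin|xout] := boolP (x \in <<t>>%VS).
  exists t; split; first by move=> z /ts zs; rewrite inE zs orbT.
  split => //; rewrite span_cons -st; apply/esym/addv_idPr.
  by rewrite -memvE.
exists (x :: t); split.
  by move=> z; rewrite !inE => /orP [->//|/ts ->]; rewrite orbT.
by split; [rewrite free_cons xout ft | rewrite !span_cons st].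
Qed.

Variable good : vT -> Prop.

Lemma collect (xs : seq vT) :
  (forall x, x \in xs -> exists s : seq vT, (forall y, y \in s -> good y) /\ x \in <<s>>%VS) ->
  exists s : seq vT, (forall y, y \in s -> good y) /\ forall x, x \in xs -> x \in <<s>>%VS.
Proof.
elim: xs => [|x xs IH] h; first by exists [::].
have [s1 [g1 m1]] := h x (mem_head _ _).
have [s2 [g2 m2]] : exists s : seq vT, (forall y, y \in s -> good y) /\ forall x, x \in xs -> x \in <<s>>%VS.
  by apply: IH => z zs; apply: h; rewrite inE zs orbT.
exists (s1 ++ s2); split.
  by move=> y; rewrite mem_cat => /orP [/g1|/g2].
move=> z; rewrite inE span_cat => /orP [/eqP ->|/m2 zs].
  by apply: (subvP (addvSl _ _)).
by apply: (subvP (addvSr _ _)).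
Qed.

End Assemble.

Unset Implicit Arguments.
Set Strict Implicit.
Theorem lemma2p2 (R : realType) (n : nat) (M : 'M[R]_n) (hM : M^T = M) :
  exists f : 'I_n -> 'cV[R]_n,
    basis_of fullv [seq f i | i : 'I_n] /\
    forall i, exists a : R, min_supp_eigenfun M a (f i).
Proof.
pose good (v : 'cV[R]_n) := exists a, min_supp_eigenfun M a v.
have [r hr] := diag_real hM.
have span_all : forall w : 'cV[R]_n, exists s : seq 'cV[R]_n,
    (forall y, y \in s -> good y) /\ w \in <<s>>%VS.
  move=> w; have [v [wv hv]] := hr w^T.
  have hw : w = \sum_i (v i)^T.
    rewrite -[w]trmxK wv; apply/matrixP => p q; rewrite !mxE summxE.
    by rewrite summxE; apply: eq_bigr => i _; rewrite !mxE.
  have hx : forall x, x \in [seq (v i)^T | i <- enum 'I_n] -> exists s : seq 'cV[R]_n,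
      (forall y, y \in s -> good y) /\ x \in <<s>>%VS.
    move=> x /mapP [i _ ->].
    have he : M *m (v i)^T = r i *: (v i)^T.
      by rewrite -{1}hM -trmx_mul hv linearZ.
    have [s [hs xs]] := circ (ltnSn _) he.
    by exists s; split => // y /hs hy; exists (r i).
  have [s [gs ms]] := @collect _ _ good _ hx.
  exists s; split => //; rewrite hw; apply: memv_suml => i _.
  by apply: ms; apply/mapP; exists i; rewrite ?mem_enum.
have [s0 [g0 m0]] := @collect _ _ good (vbasis fullv) (fun x _ => span_all x).
have [t [ts [ft st]]] := free_sub s0.
have tfull : (<<t>> = fullv)%VS.
  apply/eqP; rewrite eqEsubv subvf st /=.
  rewrite -(span_basis (vbasisP fullv)); apply/span_subvP => x /m0 //.
have szt : size t = n.
  by rewrite -(eqnP ft) tfull dimvf /dim /= muln1.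
exists (fun i => t`_i); split.
  have -> : [seq t`_i | i : 'I_n] = t.
    rewrite -[RHS](mkseq_nth 0) /mkseq szt -val_enum_ord -map_comp.
    by apply: eq_map.
  by rewrite /basis_of tfull eqxx ft.
move=> i; apply: g0; apply: ts; apply: mem_nth; rewrite szt.
exact: ltn_ord.
Qed.
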